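(* For every integer $\mathfrak{q}>2$ and every $\mathfrak{p}\in\{1,2,\dots,\mathfrak{q}-1\}$ coprime with $\mathfrak{q}$, there exists a unique $\mathfrak{q}$-periodic sequence $\mathbf{s}\in\{\mathbf A,\mathbf B\}^{\mathbb{Z}}$ such that: $\mathbf{s}[0]=\mathbf A$ and $\mathbf{s}[-1]=\mathbf B$; for every $j\in\mathbb{Z}$ with $(j\bmod\mathfrak{q})\notin\{-\mathfrak{p}\bmod\mathfrak{q},\,-\mathfrak{p}-1\bmod\mathfrak{q}\}$ we have $\mathbf{s}[j+\mathfrak{p}]=\mathbf{s}[j]$; and $\mathbf{s}[-\mathfrak{p}-1]=\mathbf A$, $\mathbf{s}[-\mathfrak{p}]=\mathbf B$.
   Context: $\mathbf A,\mathbf B$ are two symbols; for a sequence $\mathbf{s}=(a_i)_{i\in\mathbb{Z}}$, $\mathbf{s}[i]$ denotes $a_i$. *)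

(* Defs.v *)
From Stdlib Require Import ZArith.
Open Scope Z_scope.

Inductive AB : Type := A | B.

Definition periodic (q : Z) (s : Z -> AB) : Prop :=
  forall j : Z, s (j + q) = s j.

Definition lemmaB2_prop (q p : Z) (s : Z -> AB) : Prop :=
  periodic q s /\
  s 0 = A /\ s (-1) = B /\
  (forall j : Z,
      j mod q <> (- p) mod q ->
      j mod q <> (- p - 1) mod q ->
      s (j + p) = s j) /\
  s (- p - 1) = A /\ s (- p) = B.

(* Main.v *)
Require Import Defs.
From Stdlib Require Import ZArith Lia.
Open Scope Z_scope.

Lemma modeq (q a b : Z) : 0 < q -> (a mod q = b mod q <-> exists c, a = b + c * q).
Proof.
  intros Hq; split.
  - intros H. exists (a / q - b / q).
    pose proof (Z.div_mod a q ltac:(lia)). pose proof (Z.div_mod b q ltac:(lia)). nia.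
  - intros [c Hc]. symmetry. apply (Z.mod_unique a q (b / q + c)).
    + left; apply Z.mod_pos_bound; lia.
    + pose proof (Z.div_mod b q ltac:(lia)). nia.
Qed.

Lemma per_nat (q : Z) (t : Z -> AB) : periodic q t ->
  forall n : nat, forall y, t (y + Z.of_nat n * q) = t y.
Proof.
  intros Hp n; induction n; intros y.
  - f_equal; lia.
  - rewrite <- (IHn y), <- (Hp (y + Z.of_nat n * q)). f_equal; lia.
Qed.

Lemma per (q : Z) (t : Z -> AB) : 0 < q -> periodic q t ->
  forall a b, a mod q = b mod q -> t a = t b.
Proof.
  intros Hq Hp a b H. apply modeq in H; auto. destruct H as [c Hc]. subst a.
  destruct (Z_le_gt_dec 0 c).
  - replace c with (Z.of_nat (Z.to_nat c)) by lia. apply per_nat; auto.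
  - rewrite <- (per_nat q t Hp (Z.to_nat (-c)) (b + c*q)). f_equal; lia.
Qed.

Theorem lemmaB2 (q p : Z) (hq : 2 < q) (hp1 : 1 <= p) (hp2 : p <= q - 1)
  (hcop : Z.gcd p q = 1) :
  exists s : Z -> AB, lemmaB2_prop q p s /\
    forall t : Z -> AB, lemmaB2_prop q p t -> forall j : Z, t j = s j.
Proof.
  destruct (Z.gcd_bezout p q 1 hcop) as [u [v Huv]].
  assert (Hq : 0 < q) by lia.
  set (k := fun j => (j * u) mod q).
  set (m := (- u) mod q).
  assert (Kb : forall j, 0 <= k j < q) by (intros; apply Z.mod_pos_bound; lia).
  assert (Lk : forall j j', k j = k j' -> j mod q = j' mod q).
  { intros j j' H. unfold k in H. apply modeq in H; auto. destruct H as [c Hc].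
    apply modeq; auto. exists (c * p + j * v - j' * v).
    assert (E1 : j*u*p = j'*u*p + c*q*p) by (rewrite Hc; ring).
    assert (E2 : j*u*p = j - j*v*q) by (transitivity (j*(u*p+v*q) - j*v*q); [ring|rewrite Huv;ring]).
    assert (E3 : j'*u*p = j' - j'*v*q) by (transitivity (j'*(u*p+v*q) - j'*v*q); [ring|rewrite Huv;ring]).
    lia. }
  assert (Lk' : forall j j', j mod q = j' mod q -> k j = k j').
  { intros j j' H. unfold k. rewrite Z.mul_mod, H, <- Z.mul_mod; lia. }
  assert (Kn : forall n, 0 <= n < q -> k (n * p) = n).
  { intros n Hn. unfold k. symmetry. apply (Z.mod_unique _ q (- n * v)). left; lia.
    transitivity (n * (u*p+v*q) - q*(n*v)); [ring| rewrite Huv; ring]. }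
  assert (Km : 0 <= m < q) by (apply Z.mod_pos_bound; lia).
  assert (Hm0 : m <> 0).
  { intros H. unfold m in H. apply Zmod_divides in H; [|lia]. destruct H as [c Hc].
    assert (q * (v - c * p) = 1) by nia.
    assert (q * (v - c*p) > 1) ; [|lia].
    destruct (Z_le_gt_dec (v - c*p) 0); nia. }
  assert (Km1 : k (-1) = m) by (unfold k, m; f_equal; lia).
  assert (Kmp : k (- p) = q - 1).
  { unfold k. symmetry. apply (Z.mod_unique _ q (v - 1)). left; lia. nia. }
  assert (Kmp1 : k (- p - 1) = m - 1).
  { unfold k, m. pose proof (Z.div_mod (-u) q ltac:(lia)).
    symmetry. apply (Z.mod_unique _ q (v + (-u)/q)). left; lia.
    assert (E2 : p*u = 1 - v*q) by lia. lia. }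
  assert (Kstep : forall j, k j <> q - 1 -> k (j + p) = k j + 1).
  { intros j H. unfold k in *. pose proof (Z.div_mod (j*u) q ltac:(lia)).
    symmetry. apply (Z.mod_unique _ q ((j*u)/q - v)). left; specialize (Kb j); unfold k in Kb; lia. nia. }
  assert (Kmod : forall j, j mod q = (k j * p) mod q).
  { intros j. apply Lk. rewrite Kn; auto. }
  exists (fun j => if k j <? m then A else B). split.
  - split; [|split; [|split; [|split; [|split]]]].
    + intros j. assert (k (j + q) = k j) as ->; [|reflexivity].
      unfold k. apply modeq; auto. exists u. ring.
    + assert (k 0 = 0) as -> by reflexivity. destruct (0 <? m) eqn:E; auto. lia.
    + rewrite Km1, Z.ltb_irrefl; auto.
    + intros j H1 H2.
      assert (k j <> q - 1) by (intros E; apply H1, Lk; congruence).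
      assert (k j <> m - 1) by (intros E; apply H2, Lk; congruence).
      rewrite Kstep; auto.
      destruct (k j + 1 <? m) eqn:E1; destruct (k j <? m) eqn:E2; auto; lia.
    + rewrite Kmp1. destruct (m - 1 <? m) eqn:E; auto; lia.
    + rewrite Kmp. destruct (q - 1 <? m) eqn:E; auto; lia.
  - intros t [Hper [H0 [H1 [Hs [H2 H3]]]]] j.
    assert (Hn : forall n : nat, Z.of_nat n < q ->
      t (Z.of_nat n * p) = if Z.of_nat n <? m then A else B).
    { induction n; intros Hn.
      - simpl. destruct (0 <? m) eqn:E; [auto|lia].
      - rewrite Nat2Z.inj_succ in *. specialize (IHn ltac:(lia)).
        set (n' := Z.of_nat n) in *.
        assert (Kn' : k (n' * p) = n') by (apply Kn; lia).
        destruct (Z.lt_total (n' + 1) m) as [Hlt | [Heq | Hgt]].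
        + rewrite (proj2 (Z.ltb_lt _ _)) by lia.
          rewrite (proj2 (Z.ltb_lt _ _)) in IHn by lia.
          replace (Z.succ n' * p) with (n' * p + p) by ring.
          rewrite Hs; auto.
          * intros E2. apply Lk' in E2. rewrite Kn', Kmp in E2. lia.
          * intros E2. apply Lk' in E2. rewrite Kn', Kmp1 in E2. lia.
        + rewrite (proj2 (Z.ltb_ge _ _)) by lia.
          rewrite <- H1. apply (per q t Hq Hper). apply Lk.
          rewrite Km1. replace (Z.succ n') with m by lia. apply Kn; lia.
        + rewrite (proj2 (Z.ltb_ge _ _)) by lia.
          rewrite (proj2 (Z.ltb_ge _ _)) in IHn by lia.
          replace (Z.succ n' * p) with (n' * p + p) by ring.
          rewrite Hs; auto.
          * intros E2. apply Lk' in E2. rewrite Kn', Kmp in E2. lia.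
          * intros E2. apply Lk' in E2. rewrite Kn', Kmp1 in E2. lia. }
    rewrite (per q t Hq Hper j (k j * p) (Kmod j)).
    specialize (Kb j).
    replace (k j) with (Z.of_nat (Z.to_nat (k j))) by lia.
    apply Hn. lia.
Qed.
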